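(* Let $\{v_k(t)\}_{k\ge 0}$ be a monic polynomial sequence ($\deg v_k=k$) of complex polynomials. Let $(g_k)_{k\ge0}$ be complex numbers with $g_0=0$ and $g_k\neq 0$ for $k\ge 1$, and let $(h_k)_{k\ge 0}$ be complex numbers with $h_k\neq h_j$ whenever $k\neq j$. Let $\gamma$ and $\phi$ be the linear operators on the space of complex polynomials defined by $\gamma v_k=g_k v_{k-1}$ for $k\ge1$, $\gamma v_0=0$, and $\phi v_k=h_k v_k$ for $k\ge 0$. Then the monic polynomial sequence $\{u_n(t)\}_{n\ge 0}$ ($\deg u_n=n$) satisfying $$\gamma u_n(t)+\phi u_n(t)=h_n u_n(t),\qquad n\ge 0,$$ is given by $u_n(t)=\sum_{k=0}^n c_{n,k}v_k(t)$, where $c_{n,n}=1$ for $n\ge0$ and $$c_{n,k}=\prod_{j=k}^{n-1}\frac{g_{j+1}}{h_n-h_j},\qquad 0\le k\le n-1.$$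
   Context: A polynomial sequence is a sequence of polynomials $p_0,p_1,\dots$ with $\deg p_n=n$; it is monic if each $p_n$ is monic. Every polynomial sequence is a basis of the space of polynomials. *)

(* Defs.v *)
From HB Require Import structures.
From mathcomp Require Import all_boot all_order all_algebra.
From mathcomp Require Import complex.
From mathcomp Require Import Rstruct.
From Stdlib Require Import Reals.
Set Implicit Arguments. Unset Strict Implicit. Unset Printing Implicit Defensive.
Import Order.TTheory GRing.Theory Num.Theory.
Local Open Scope ring_scope.

Definition CC : fieldType := (complex R : fieldType).

Definition monic_poly_seq (p : nat -> {poly CC}) : Prop :=
  forall n : nat, p n \is monic /\ size (p n) = n.+1.

Definition coef_c (g h : nat -> CC) (n k : nat) : CC :=
  if k == n then 1
  else \prod_(k <= j < n) (g j.+1 / (h n - h j)).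

(* Main.v *)
Require Import Defs.
From HB Require Import structures.
From mathcomp Require Import all_boot all_order all_algebra.
From mathcomp Require Import complex Rstruct.
From mathcomp Require Import ring.
Import GRing.Theory.
Local Open Scope ring_scope.

Section Aux.
Variables (v : nat -> {poly CC}) (g h : nat -> CC)
  (gamma phi : {linear {poly CC} -> {poly CC}}).
Hypothesis hv : monic_poly_seq v.
Hypothesis hg0 : g 0%N = 0.
Hypothesis hgam : forall k, gamma (v k) = g k *: v k.-1.
Hypothesis hphi : forall k : nat, phi (v k) = h k *: v k.

Definition T (p : {poly CC}) := gamma p + phi p.

Lemma coef_v_top s : (v s)`_s = 1.
Proof. have [m sz] := hv s. by move/monicP: m; rewrite lead_coefE sz. Qed.

Lemma decomp (p : {poly CC}) s : size p = s.+1 -> (size (p - lead_coef p *: v s)%R <= s)%N.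
Proof.
move=> sz; apply/leq_sizeP => j hj.
have [_ szv] := hv s.
rewrite coefB coefZ; case: (ltngtP j s) => [|hjs|->].
- by rewrite ltnNge hj.
- have /leq_sizeP h1 : (size p <= j)%N by rewrite sz.
  have /leq_sizeP h2 : (size (v s) <= j)%N by rewrite szv.
  by rewrite h1 // h2 // mulr0 subr0.
- by rewrite coef_v_top mulr1 lead_coefE sz subrr.
Qed.

Lemma Tv_size k : (size (T (v k)) <= k.+1)%N.
Proof.
rewrite /T hgam hphi; apply: leq_trans (size_polyD _ _) _.
rewrite geq_max; apply/andP; split.
- apply: leq_trans (size_scale_leq _ _) _.
  have [_ ->] := hv k.-1. by case: k.
- apply: leq_trans (size_scale_leq _ _) _. by have [_ ->] := hv k.
Qed.

Lemma T_size s (p : {poly CC}) : (size p <= s)%N -> (size (T p) <= s)%N.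
Proof.
elim: s p => [|s IH] p hp.
  move: hp; rewrite size_poly_leq0 => /eqP ->.
  by rewrite /T !raddf0 addr0 size_poly0.
case: (ltngtP (size p) s.+1) => [hlt||hsz]; last 2 first.
- by rewrite ltnNge hp.
- have hq := decomp _ _ hsz.
  have -> : p = lead_coef p *: v s + (p - lead_coef p *: v s) by rewrite addrC subrK.
  have -> : T (lead_coef p *: v s + (p - lead_coef p *: v s)) =
     lead_coef p *: T (v s) + T (p - lead_coef p *: v s).
    by rewrite /T !linearD !linearZ /= addrACA.
  apply: leq_trans (size_polyD _ _) _; rewrite geq_max; apply/andP; split.
  + exact: leq_trans (size_scale_leq _ _) (Tv_size s).
  + exact: leq_trans (IH _ hq) (leqnSn _).
- exact: leq_trans (IH _ hlt) (leqnSn _).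
Qed.

Lemma T_nz c m (d : {poly CC}) : size d = m.+1 -> h m != c -> T d - c *: d != 0.
Proof.
move=> hsz hne.
have hq := decomp _ _ hsz.
set a := lead_coef d.
have ha : a != 0 by rewrite lead_coef_eq0 -size_poly_eq0 hsz.
set q := d - a *: v m.
have hd : d = a *: v m + q by rewrite /q addrC subrK.
have -> : T d - c *: d = (a * (h m - c)) *: v m + (a *: (g m *: v m.-1) + (T q - c *: q)).
  have eT : T d = a *: (g m *: v m.-1 + h m *: v m) + T q.
    by rewrite {1}hd /T !linearD !linearZ /= hgam hphi !scalerA [g m * a]mulrC [h m * a]mulrC addrACA.
  rewrite eT {1}hd !scalerDr opprD !scalerA mulrBr scalerBl [c * a]mulrC.
  ring.
have hvm : size (v m) = m.+1 by have [_ ->] := hv m.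
have hs1 : size ((a * (h m - c)) *: v m) = m.+1.
  by rewrite size_scale // mulf_neq0 // subr_eq0.
rewrite -size_poly_eq0 size_polyDl ?hs1 //.
rewrite ltnS; apply: leq_trans (size_polyD _ _) _; rewrite geq_max; apply/andP; split.
- case: (posnP m) => [m0|mpos].
    by rewrite m0 hg0 scale0r scaler0 size_poly0.
  apply: leq_trans (size_scale_leq _ _) _; apply: leq_trans (size_scale_leq _ _) _.
  have [_ ->] := hv m.-1; by rewrite prednK.
- apply: leq_trans (size_polyD _ _) _; rewrite geq_max; apply/andP; split.
  + exact: T_size.
  + by rewrite size_polyN; apply: leq_trans (size_scale_leq _ _) _.
Qed.

Hypothesis hh : forall k j : nat, k <> j -> h k <> h j.

Lemma coef_step n k : (k < n)%N ->
  coef_c g h n k * (h n - h k) = g k.+1 * coef_c g h n k.+1.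
Proof.
move=> hk.
have E : coef_c g h n k.+1 = \prod_(k.+1 <= j < n) (g j.+1 / (h n - h j)).
  rewrite /coef_c; case: eqP => // ->; by rewrite big_geq.
rewrite E /coef_c (ltn_eqF hk) big_ltn //.
have hne : h n - h k != 0.
  rewrite subr_eq0; apply/eqP; apply: hh => hnk; move: hk; rewrite hnk ltnn //.
by rewrite mulrAC divfK.
Qed.

Lemma Tw n : T (\sum_(k < n.+1) coef_c g h n k *: v k) =
   h n *: (\sum_(k < n.+1) coef_c g h n k *: v k).
Proof.
rewrite /T !linear_sum /=.
under eq_bigr do rewrite linearZ /= hgam.
under [X in _ + X]eq_bigr do rewrite linearZ /= hphi.
rewrite big_ord_recl /= hg0 scale0r scaler0 add0r.
rewrite !big_ord_recr /= addrA !scalerA [h n * _]mulrC; congr (_ + _).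
rewrite -big_split /=; apply: eq_bigr => i _.
rewrite /bump /= add0n !scalerA -scalerDl; congr (_ *: _).
have := coef_step _ _ (ltn_ord i).
rewrite mulrBr => E; rewrite [_ * g _]mulrC -E.
by rewrite [h n * _]mulrC; ring.
Qed.
End Aux.

Theorem theorem1
  (v : nat -> {poly CC}) (g h : nat -> CC)
  (gamma phi : {linear {poly CC} -> {poly CC}})
  (hv : monic_poly_seq v)
  (hg0 : g 0%N = 0) (hg : forall k : nat, (0 < k)%N -> g k != 0)
  (hh : forall k j : nat, k <> j -> h k <> h j)
  (hgamma0 : gamma (v 0%N) = 0)
  (hgamma : forall k : nat, (0 < k)%N -> gamma (v k) = g k *: v k.-1)
  (hphi : forall k : nat, phi (v k) = h k *: v k) :
  forall u : nat -> {poly CC}, monic_poly_seq u ->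
    ((forall n : nat, gamma (u n) + phi (u n) = h n *: u n) <->
     (forall n : nat, u n = \sum_(k < n.+1) coef_c g h n k *: v k)).
Proof.
have hgam : forall k, gamma (v k) = g k *: v k.-1.
  by case=> [|k]; [rewrite hgamma0 hg0 scale0r | exact: hgamma].
have TwE := Tw _ _ _ _ _ hg0 hgam hphi hh.
move=> u hu; split => H n; last first.
  by rewrite H; exact: TwE.
set w := \sum_(k < n.+1) coef_c g h n k *: v k.
apply/eqP; rewrite -subr_eq0; apply/negPn/negP => hd.
have hsz : (size (u n - w)%R <= n)%N.
  apply/leq_sizeP => j hj.
  have hvk : forall k, (k < j)%N -> (v k)`_j = 0.
    move=> k hk; have [_ szk] := hv k.
    by apply/leq_sizeP; [rewrite szk | exact: leqnn].
  rewrite coefB /w coef_sum.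
  case: (ltngtP n j) => [hnj||->]; last 2 first.
  - by rewrite ltnNge hj.
  - rewrite big_ord_recr /= big1 => [|i _]; last by rewrite coefZ hvk ?mulr0.
    by rewrite add0r coefZ (coef_v_top _ hu) (coef_v_top _ hv) /coef_c eqxx mulr1 subrr.
  rewrite big1 => [|i _]; last by rewrite coefZ hvk ?mulr0 // (leq_trans (ltn_ord i)).
  have [_ szu] := hu n.
  by rewrite subr0; apply/leq_sizeP; [rewrite szu | exact: leqnn].
move: hd hsz; rewrite -size_poly_eq0.
case E: (size (u n - w)%R) => [//|m] _ hm.
have hne : h m != h n by apply/eqP; apply: hh => hmn; move: hm; rewrite hmn ltnn.
have := T_nz _ _ _ _ _ hv hg0 hgam hphi _ _ _ E hne.
have eq : T gamma phi (u n - w) = T gamma phi (u n) - T gamma phi w.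
  by rewrite /T !linearB /=; ring.
rewrite eq {1}/T H TwE -/w scalerBr.
by rewrite subrr eqxx.
Qed.
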